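(* Let $L>0$. Then (i) $\Psi_2(x;L)\le \exp(x^2)-1$ for all $x\ge 0$; and (ii) $\Psi_2(x;L)\ge \Psi_1(x;L/3)$ for all $x\ge 0$.
   Context: For $x\ge 0$ let $h_1(x)=1+x-\sqrt{1+2x}$ and $h_2(x)=(1+x)\log(1+x)-x$. For $L>0$ define $\Psi_1(x;L)=\exp\big(\frac{2}{L^2}h_1(Lx)\big)-1$ (the Bernstein–Orlicz function) and $\Psi_2(x;L)=\exp\big(\frac{2}{L^2}h_2(Lx)\big)-1$ (the Bennett–Orlicz function), $x\ge 0$. *)

(* Defs.v *)
From Stdlib Require Import Reals.
Open Scope R_scope.

Definition h1 (x : R) : R := 1 + x - sqrt (1 + 2 * x).
Definition h2 (x : R) : R := (1 + x) * ln (1 + x) - x.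

Definition Psi1 (x L : R) : R := exp (2 / L ^ 2 * h1 (L * x)) - 1.
Definition Psi2 (x L : R) : R := exp (2 / L ^ 2 * h2 (L * x)) - 1.

(* Main.v *)
Require Import Defs.
From Stdlib Require Import Reals.
Open Scope R_scope.
From Stdlib Require Import Lra Psatz.
From Coquelicot Require Import Coquelicot.

Lemma exp_mono (a b : R) : a <= b -> exp a <= exp b.
Proof. intros [H|H]; [left; apply exp_increasing; auto| subst; lra]. Qed.

Lemma nonneg_from_deriv (f df : R -> R) :
  (forall y, 0 <= y -> is_derive f y (df y)) ->
  (forall y, 0 <= y -> 0 <= df y) -> forall y, 0 <= y -> f 0 <= f y.
Proof.
  intros Hd Hp y Hy. destruct Hy as [Hy|Hy]; [|subst; lra].
  destruct (MVT_cor2 f df 0 y Hy) as [c [Hc1 Hc2]].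
  { intros c Hc. apply is_derive_Reals. apply Hd. lra. }
  assert (0 <= df c) by (apply Hp; lra). nra.
Qed.

Lemma ln_le_id (y : R) : 0 <= y -> ln (1 + y) <= y.
Proof.
  intros Hy. rewrite <- (ln_exp y) at 2. apply ln_le; [lra|apply exp_ineq1_le].
Qed.

Lemma part1 (y : R) : 0 <= y -> h2 y <= y ^ 2 / 2.
Proof.
  intros Hy.
  assert (H := nonneg_from_deriv (fun y => y ^ 2 / 2 - ((1 + y) * ln (1 + y) - y))
     (fun y => y - ln (1 + y))).
  unfold h2.
  assert (E : 0 ^ 2 / 2 - ((1 + 0) * ln (1 + 0) - 0) = 0)
    by (rewrite Rplus_0_r, ln_1; field).
  assert (0 <= y ^ 2 / 2 - ((1 + y) * ln (1 + y) - y)); [|lra].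
  rewrite <- E at 1.
  apply H; auto.
  - intros z Hz. auto_derive; [lra|]. field. lra.
  - intros z Hz. pose proof (ln_le_id z Hz). lra.
Qed.

Lemma sq_stuff (y : R) : 0 <= y -> 1 + y <= sqrt (1 + 2 * y / 3) * (1 + 2 * y / 3).
Proof.
  intros Hy. set (t := 1 + 2 * y / 3).
  assert (Ht : 0 <= t) by (unfold t; lra).
  pose proof (sqrt_sqrt t Ht). pose proof (sqrt_pos t).
  set (s := sqrt t) in *.
  assert (Hc : (1+y)^2 <= (s*t)^2).
  { replace ((s*t)^2) with (t*t*t) by (rewrite <- H; ring). unfold t. nra. }
  destruct (Rle_lt_dec (1+y) (s*t)) as [h|h]; auto.
  assert (0 <= s * t) by nra. nra.
Qed.

Lemma part2 (y : R) : 0 <= y -> 9 * h1 (y / 3) <= h2 y.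
Proof.
  intros Hy. unfold h1, h2.
  set (f := fun y => (1 + y) * ln (1 + y) - y - (9 + 3 * y - 9 * sqrt (1 + 2 * y / 3))).
  set (g := fun y => ln (1 + y) - 3 + 3 / sqrt (1 + 2 * y / 3)).
  assert (Hg : forall y, 0 <= y -> is_derive f y (g y)).
  { intros z Hz. unfold f, g. auto_derive; [repeat split; lra|].
    assert (0 < sqrt (1 + 2 * z / 3)) by (apply sqrt_lt_R0; lra).
    unfold Rdiv in *. field. lra. }
  assert (Hg2 : forall y, 0 <= y -> is_derive g y (/ (1 + y) - / (sqrt (1 + 2 * y / 3) * (1 + 2 * y / 3)))).
  { intros z Hz. unfold g.
    assert (0 < sqrt (1 + 2 * z / 3)) by (apply sqrt_lt_R0; lra).
    pose proof (sqrt_sqrt (1 + 2 * z / 3)).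
    auto_derive; [repeat split; lra|].
    unfold Rdiv in *. set (s := sqrt (1 + 2 * z * / 3)) in *.
    rewrite <- H0 by lra. field. lra. }
  assert (Hgp : forall y, 0 <= y -> 0 <= g y).
  { intros z Hz.
    assert (g 0 = 0) as E0.
    { unfold g. rewrite Rplus_0_r, ln_1.
      replace (1 + 2 * 0 / 3) with 1 by field. rewrite sqrt_1. field. }
    rewrite <- E0. apply (nonneg_from_deriv g _ Hg2); auto.
    intros w Hw. pose proof (sq_stuff w Hw).
    assert (0 < sqrt (1 + 2 * w / 3)) by (apply sqrt_lt_R0; lra).
    assert (0 < 1 + w) by lra.
    assert (/ (sqrt (1 + 2 * w / 3) * (1 + 2 * w / 3)) <= / (1 + w)); [|lra].
    apply Rinv_le_contravar; auto. }
  assert (E0 : f 0 = 0).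
  { unfold f. rewrite Rplus_0_r, ln_1.
    replace (1 + 2 * 0 / 3) with 1 by field. rewrite sqrt_1. ring. }
  pose proof (nonneg_from_deriv f g Hg Hgp y Hy) as Hf.
  rewrite E0 in Hf. unfold f in Hf.
  replace (1 + 2 * (y / 3)) with (1 + 2 * y / 3) by field.
  lra.
Qed.

Theorem proposition3 (L : R) (HL : 0 < L) :
  (forall x : R, 0 <= x -> Psi2 x L <= exp (x ^ 2) - 1) /\
  (forall x : R, 0 <= x -> Psi2 x L >= Psi1 x (L / 3)).
Proof.
  split; intros x Hx; unfold Psi1, Psi2.
  - assert (2 / L ^ 2 * h2 (L * x) <= x ^ 2); [|pose proof (exp_mono _ _ H); lra].
    assert (0 <= L * x) by nra.
    pose proof (part1 _ H).
    assert (0 < L ^ 2) by nra.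
    replace (x ^ 2) with (2 / L ^ 2 * ((L * x) ^ 2 / 2)) by (field; lra).
    apply Rmult_le_compat_l; auto.
    unfold Rdiv. apply Rmult_le_pos; [lra|]. left; apply Rinv_0_lt_compat; lra.
  - assert (2 / (L / 3) ^ 2 * h1 (L / 3 * x) <= 2 / L ^ 2 * h2 (L * x));
      [|pose proof (exp_mono _ _ H); lra].
    assert (0 <= L * x) by nra.
    pose proof (part2 _ H).
    assert (0 < L ^ 2) by nra.
    replace (L / 3 * x) with (L * x / 3) by field.
    replace (2 / (L / 3) ^ 2 * h1 (L * x / 3)) with (2 / L ^ 2 * (9 * h1 (L * x / 3)))
      by (field; lra).
    apply Rmult_le_compat_l; auto.
    unfold Rdiv. apply Rmult_le_pos; [lra|]. left; apply Rinv_0_lt_compat; lra.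
Qed.
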